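(* Suppose Assumptions 1–6 hold and Condition M1 holds, i.e. $\lim_{n\to\infty}M_n/m_n^{**}=0$. Then $\Delta_n=o\{R_n(m_n^* )\}$, i.e. $R_n(\mathbf w_n^* )/R_n(m_n^* )\to1$.
   Context: Setting. For each sample size $n$ one observes $\mathbf y=\boldsymbol\mu+\boldsymbol\varepsilon\in\mathbb R^n$ with $\boldsymbol\mu=\mathbf X\boldsymbol\beta$, where $\mathbf X=(x_{ij})$ is a nonstochastic $n\times p_n$ matrix with $p_n<n$, $E(\boldsymbol\varepsilon)=\mathbf 0$, $\mathrm{Cov}(\boldsymbol\varepsilon)=\boldsymbol\Omega$ positive definite (all may depend on $n$). Fix integers $0=\nu_0<\nu_1<\cdots<\nu_{q_n}=p_n$. For $m=1,\dots,q_n$, $\mathbf X_m$ is the $n\times\nu_m$ matrix of the first $\nu_m$ columns of $\mathbf X$ (full column rank), $\mathbf P_m=\mathbf X_m(\mathbf X_m^\top\mathbf X_m)^{-1}\mathbf X_m^\top$, $\mathbf P_0=\mathbf 0$. Candidate models are $m\in\{1,\dots,M_n\}$, $2\le M_n\le q_n$. $R_n(m)=E\|\mathbf P_m\mathbf y-\boldsymbol\mu\|^2$; for $\mathbf w\in\mathbb R^{M_n}$, $R_n(\mathbf w)=E\|\sum_{m=1}^{M_n}w_m\mathbf P_m\mathbf y-\boldsymbol\mu\|^2$. $\mathcal W_n=\{\mathbf w\in[0,1]^{M_n}:\sum_m w_m=1\}$. $m_n^*$ minimizes $R_n(m)$ over $\{1,\dots,M_n\}$, $m_n^{**}$ over $\{1,\dots,q_n\}$,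 $\mathbf w_n^*$ minimizes $R_n(\mathbf w)$ over $\mathcal W_n$ (all unique); $\Delta_n=R_n(m_n^* )-R_n(\mathbf w_n^* )$. $\theta_{n,m}=\dfrac{n^{-1}\boldsymbol\mu^\top(\mathbf P_m-\mathbf P_{m-1})\boldsymbol\mu}{\mathrm{tr}\{(\mathbf P_m-\mathbf P_{m-1})\boldsymbol\Omega\}}$, $m=1,\dots,q_n$; $d_n=\max\{m:\theta_{n,m}>0\}$. Assumption 1: $\|\boldsymbol\mu\|^2/n=O(1)$. Assumption 2: constants $0<c_1\le c_2<\infty$ with $c_1<\lambda_{\min}(\boldsymbol\Omega)\le\lambda_{\max}(\boldsymbol\Omega)<c_2$. Assumption 3: for each large $n$, $\theta_{n,1}\ge\cdots\ge\theta_{n,q_n}$. Assumption 4: a constant $V\ge1$ with $\max_{1\le m\le d_n}(\nu_m-\nu_{m-1})\le V$ for all large $n$. Assumption 5: for every fixed positive integer $m$ there are $\bar\theta_m>0$, $K_m>0$ such that for all $n\ge K_m$, $m\le d_n$ and $\theta_{n,m}\ge\bar\theta_m$. Assumption 6: for each large $n$ there is $m_n'\in\{1,\dots,d_n-1\}$ with $R_n(m)<R_n(m-1)$ for $2\le m\le m_n'$, $R_n(m)\ge R_n(m-1)$ for $m_n'<m\le d_n$, and $R_n(d_n)>R_n(d_n-1)$. *)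

(* Defs.v *)
From HB Require Import structures.
From mathcomp Require Import all_boot all_order all_algebra.
From mathcomp Require Import all_classical all_reals topology normedtype sequences.
Set Implicit Arguments. Unset Strict Implicit. Unset Printing Implicit Defensive.
Import Order.TTheory GRing.Theory Num.Theory.
Local Open Scope ring_scope.

Section Defs.
Variable R : realType.

Definition firstcols (n p k : nat) (X : 'M[R]_(n, p)) : 'M[R]_(n, k) :=
  \matrix_(i, j) oapp (X i) 0 (insub (val j) : option 'I_p).

(* hat matrix A (A^T A)^{-1} A^T ; for k = 0 this is the zero matrix. *)
Definition projmx (n k : nat) (A : 'M[R]_(n, k)) : 'M[R]_n :=
  A *m invmx (A^T *m A) *m A^T.

Definition Pm (n p : nat) (X : 'M[R]_(n, p)) (nu : nat -> nat) (m : nat) : 'M[R]_n :=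
  projmx (firstcols (nu m) X).

Definition sqnorm (n : nat) (v : 'cV[R]_n) : R := \sum_i (v i 0) ^+ 2.

(* E || A y - mu ||^2  for y = mu + eps, E eps = 0, Cov eps = Om *)
Definition riskA (n : nat) (mu : 'cV[R]_n) (Om A : 'M[R]_n) : R :=
  sqnorm (A *m mu - mu) + \tr (A *m Om *m A^T).

Definition Rmod (n p : nat) (X : 'M[R]_(n, p)) (beta : 'cV[R]_p) (Om : 'M[R]_n)
  (nu : nat -> nat) (m : nat) : R :=
  riskA (X *m beta) Om (Pm X nu m).

(* weight vector w : 'I_M -> R ; component i is the weight of model i.+1 *)
Definition wmx (n M : nat) (P : nat -> 'M[R]_n) (w : 'I_M -> R) : 'M[R]_n :=
  \sum_(i < M) w i *: P i.+1.

Definition Rwt (n p : nat) (X : 'M[R]_(n, p)) (beta : 'cV[R]_p) (Om : 'M[R]_n)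
  (nu : nat -> nat) (M : nat) (w : 'I_M -> R) : R :=
  riskA (X *m beta) Om (wmx (Pm X nu) w).

Definition inW (M : nat) (w : 'I_M -> R) : Prop :=
  (forall i, 0 <= w i <= 1) /\ \sum_i w i = 1.

Definition theta (n p : nat) (X : 'M[R]_(n, p)) (beta : 'cV[R]_p) (Om : 'M[R]_n)
  (nu : nat -> nat) (m : nat) : R :=
  let D := Pm X nu m - Pm X nu m.-1 in
  let mu := X *m beta in
  (n%:R^-1 * (mu^T *m D *m mu) 0 0) / \tr (D *m Om).

(* d_n = max { m in 1..q : theta_{n,m} > 0 }  (0 if the set is empty) *)
Local Open Scope nat_scope.
Definition dn (q : nat) (th : nat -> R) : nat :=
  \max_(1 <= m < q.+1 | (0 < th m)%R) m.
Local Close Scope ring_scope.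

End Defs.

(* Main.v *)
Require Import Defs.
From HB Require Import structures.
From mathcomp Require Import all_boot all_order all_algebra.
From mathcomp Require Import all_classical all_reals topology normedtype sequences.
From mathcomp Require Import complex spectral sesquilinear.
From mathcomp Require Import ring lra zify.
From Stdlib Require Import Lia.
Import Order.TTheory GRing.Theory Num.Theory numFieldTopology.Exports numFieldNormedType.Exports.
Local Open Scope ring_scope.
Set Implicit Arguments. Unset Strict Implicit. Unset Printing Implicit Defensive.

Section Ray.
Variable R : realType.
Local Notation C := (R[i]).
Local Notation rc := (real_complex R).

Lemma conjC_rc (x : R) : (rc x)^*%R = rc x.
Proof.
apply: conj_Creal; rewrite realE; have := num_real x; rewrite realE => /orP[h|h].
  by rewrite ler0c h.
by apply/orP; right; rewrite -(rmorph0 rc) lecR.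
Qed.


Lemma delta_diag n (d : 'rV[C]_n) (j : 'I_n) :
  delta_mx (0 : 'I_1) j *m diag_mx d = d 0 j *: delta_mx 0 j.
Proof.
apply/matrixP=> a b; rewrite mul_mx_diag !mxE.
rewrite mulrC (ord1 a) eqxx /=; case: (b =P j) => [->|_] //=; by rewrite ?mulr0 ?mul0r.
Qed.

Lemma ray n (Om : 'M[R]_n) (c1 c2 : R) : Om^T = Om ->
  (forall a, eigenvalue Om a -> c1 < a < c2) -> forall u : 'rV[R]_n,
  c1 * (u *m u^T) 0 0 <= (u *m Om *m u^T) 0 0 /\
  (u *m Om *m u^T) 0 0 <= c2 * (u *m u^T) 0 0.
Proof.
move=> Omt Oeig u.
set A := map_mx rc Om.
have At : map_mx (@Num.conj C) (A^T) = A.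
  rewrite /A map_trmx Omt -map_mx_comp; apply/matrixP=> i j; rewrite !mxE /=.
  exact: conjC_rc.
have An : A \is normalmx by apply/normalmxP; rewrite At.
have Ah : A \is hermsymmx by apply/is_hermitianmxP; rewrite expr0 scale1r At.
set P := spectralmx A; set d := spectral_diag A.
have AE : A = invmx P *m diag_mx d *m P := orthomx_spectralP An.
have PU : P \is unitarymx := spectral_unitarymx A.
have Pu : P \in unitmx := spectral_unit A.
have PPt : P *m map_mx (@Num.conj C) (P^T) = 1%:M by apply/unitarymxP.
have PtP : map_mx (@Num.conj C) (P^T) *m P = 1%:M by rewrite -invmx_unitary // mulVmx.
have dreal : forall j, exists r, d 0 j = rc r /\ c1 < r < c2.
  move=> j; have /mxOverP /(_ 0 j) := hermitian_spectral_diag_real Ah.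
  rewrite -/d => dr.
  have dE : d 0 j = rc (complex.Re (d 0 j)).
    move: dr; rewrite realE; case: (d 0 j) => a b /=.
    rewrite !lecE => /orP[/andP[/eqP h _]|/andP[/eqP h _]]; rewrite /= in h; first [by rewrite h | by rewrite -h].
  exists (complex.Re (d 0 j)); split => //; apply: Oeig.
  have ev : eigenvalue A (d 0 j).
    apply/eigenvalueP; exists (row j P).
      by rewrite AE rowE !mulmxA mulmxK // delta_diag -scalemxAl.
    apply/eqP => r0; have := mulmxK Pu (delta_mx (0:'I_1) j).
    rewrite -rowE r0 mul0mx => /matrixP /(_ 0 j); rewrite !mxE !eqxx /=.
    by move/eqP; rewrite eq_sym oner_eq0.
  move: ev; rewrite /eigenvalue /eigenspace -!mxrank_eq0 !mxrank_ker dE.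
  by rewrite /A -(map_scalar_mx rc) -map_mxB mxrank_map.
set uc := map_mx rc u.
set z := uc *m map_mx (@Num.conj C) (P^T).
have uct : map_mx (@Num.conj C) (uc^T) = uc^T.
  apply/matrixP=> i j; rewrite !mxE; exact: conjC_rc.
have zt : map_mx (@Num.conj C) (z^T) = P *m uc^T.
  rewrite /z trmx_mul map_mxM uct map_trmx trmxK -map_mx_comp map_mx_id // => x /=; exact: conjCK.
have key : forall c : R, rc ((u *m Om *m u^T) 0 0 - c * (u *m u^T) 0 0) =
   \sum_j (d 0 j - rc c) * (z 0 j * (z 0 j)^*).
  move=> c.
  have e1 : rc ((u *m Om *m u^T) 0 0) = (z *m diag_mx d *m map_mx (@Num.conj C) (z^T)) 0 0.
    have h1 : rc ((u *m Om *m u^T) 0 0) = (map_mx rc (u *m Om *m u^T)) 0 0. by rewrite [in RHS]mxE. rewrite h1.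
    rewrite zt /z !map_mxM map_trmx -/uc -/A AE invmx_unitary // !mulmxA. by [].
  have e2 : rc ((u *m u^T) 0 0) = (z *m map_mx (@Num.conj C) (z^T)) 0 0.
    have -> : rc ((u *m u^T) 0 0) = (map_mx rc (u *m u^T)) 0 0 by rewrite [in RHS]mxE.
    rewrite zt /z !map_mxM map_trmx -/uc -mulmxA (mulmxA _ P) PtP mul1mx. by [].
  have -> : rc ((u *m Om *m u^T) 0 0 - c * (u *m u^T) 0 0) =
    rc ((u *m Om *m u^T) 0 0) - rc c * rc ((u *m u^T) 0 0).
    by rewrite rmorphB rmorphM.
  rewrite e1 e2 mul_mx_diag !mxE mulr_sumr -sumrB.
  apply: eq_bigr => j _; rewrite !mxE; ring.
have t0 : forall j, 0 <= z 0 j * (z 0 j)^* by move=> j; exact: mul_conjC_ge0.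
split.
  rewrite -subr_ge0 -ler0c key; apply: sumr_ge0 => j _.
  have [r [-> /andP[h1 _]]] := dreal j.
  by rewrite mulr_ge0 // -rmorphB ler0c subr_ge0 ltW.
rewrite -subr_ge0 -ler0c.
have -> : c2 * (u *m u^T) 0 0 - (u *m Om *m u^T) 0 0 =
  - ((u *m Om *m u^T) 0 0 - c2 * (u *m u^T) 0 0) by ring.
have -> : forall x : R, rc (- x) = - rc x by move=> x; rewrite rmorphN.
rewrite key -sumrN; apply: sumr_ge0 => j _.
have [r [-> /andP[_ h2]]] := dreal j.
by rewrite -mulNr mulr_ge0 // -rmorphB -rmorphN ler0c oppr_ge0 subr_le0 ltW.
Qed.
End Ray.

Section Proj.
Variable R : realType.

Lemma trBBt_ge0 m n (B : 'M[R]_(m, n)) : 0 <= \tr (B *m B^T).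
Proof.
rewrite /mxtrace; apply: sumr_ge0 => i _; rewrite mxE; apply: sumr_ge0 => j _.
by rewrite mxE -expr2 sqr_ge0.
Qed.

Lemma BBt0 m n (B : 'M[R]_(m, n)) : B *m B^T = 0 -> B = 0.
Proof.
move=> h; apply/matrixP => i j; rewrite mxE.
have /matrixP /(_ i i) := h; rewrite !mxE => /eqP.
rewrite psumr_eq0 => [/allP /(_ j) |k _]; last by rewrite mxE -expr2 sqr_ge0.
rewrite mem_index_enum => /(_ isT) /=; rewrite mxE -expr2 sqrf_eq0.
by move/eqP.
Qed.

Lemma gram_unit n k (A : 'M[R]_(n, k)) : \rank A = k -> (A^T *m A) \in unitmx.
Proof.
move=> rA; rewrite -row_free_unit.
have Y0 : forall p (Y : 'M[R]_(p, k)), Y *m (A^T *m A) = 0 -> Y = 0.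
  move=> p Y hY.
  have : (Y *m A^T) *m (Y *m A^T)^T = 0.
    by rewrite trmx_mul trmxK mulmxA -(mulmxA Y) hY mul0mx.
  move/BBt0 => /eqP; rewrite mulmx_free_eq0; first by move/eqP.
  by rewrite /row_free mxrank_tr rA.
have := mulmx_ker (A^T *m A) => /Y0 K0.
have := mxrank_ker (A^T *m A); rewrite K0 mxrank0 => /esym/eqP.
rewrite subn_eq0 /row_free => h; rewrite eqn_leq h rank_leq_row //.
Qed.

Lemma projmx_tr n k (A : 'M[R]_(n, k)) : (projmx A)^T = projmx A.
Proof.
by rewrite /projmx !trmx_mul trmxK trmx_inv trmx_mul trmxK mulmxA.
Qed.

Lemma projmx_A n k (A : 'M[R]_(n, k)) : \rank A = k -> projmx A *m A = A.
Proof.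
move=> rA; rewrite /projmx -!mulmxA mulVmx ?mulmx1 //; exact: gram_unit.
Qed.

Lemma projmx_idem n k (A : 'M[R]_(n, k)) : \rank A = k ->
  projmx A *m projmx A = projmx A.
Proof.
move=> rA; rewrite {1}/projmx !mulmxA projmx_A //.
Qed.

Lemma projmx_trace n k (A : 'M[R]_(n, k)) : \rank A = k -> \tr (projmx A) = k%:R.
Proof.
move=> rA; rewrite /projmx -mulmxA mxtrace_mulC -mulmxA mulVmx ?mxtrace1 //.
exact: gram_unit.
Qed.


Definition selmx (l k : nat) : 'M[R]_(l, k) := \matrix_(i, j) (i == j :> nat)%:R.

Lemma firstcols_sub n p k l (X : 'M[R]_(n, p)) : (k <= l)%N ->
  firstcols k X = firstcols l X *m selmx l k.
Proof.
move=> kl; apply/matrixP => r j; rewrite !mxE.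
rewrite (bigD1 (widen_ord kl j)) //= big1 ?addr0.
  by rewrite !mxE /= eqxx mulr1.
move=> i /eqP ij; rewrite !mxE.
case: eqP => [e|_]; last by rewrite mulr0.
by case: ij; apply/val_inj.
Qed.

Lemma projmx_nest n k l (A : 'M[R]_(n, l)) (B : 'M[R]_(n, k)) (S : 'M[R]_(l, k)) :
  \rank A = l -> B = A *m S ->
  projmx A *m projmx B = projmx B /\ projmx B *m projmx A = projmx B.
Proof.
move=> rA BE.
have h1 : projmx A *m projmx B = projmx B.
  by rewrite {1}/projmx !mulmxA {1}BE mulmxA projmx_A // -BE.
split => //.
by rewrite -[projmx B in LHS]projmx_tr -[projmx A]projmx_tr -trmx_mul h1 projmx_tr.
Qed.


Lemma sqnormE n (v : 'cV[R]_n) : sqnorm v = (v^T *m v) 0 0.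
Proof. by rewrite /sqnorm mxE; apply: eq_bigr => i _; rewrite mxE expr2. Qed.

Lemma sqnorm_ge0 n (v : 'cV[R]_n) : 0 <= sqnorm v.
Proof. by apply: sumr_ge0 => i _; rewrite sqr_ge0. Qed.

Lemma entryD (A B : 'M[R]_1) : (A + B) 0 0 = A 0 0 + B 0 0.
Proof. by rewrite mxE. Qed.
Lemma entryB (A B : 'M[R]_1) : (A - B) 0 0 = A 0 0 - B 0 0.
Proof. by rewrite !mxE. Qed.

Lemma pyth n (P : 'M[R]_n) (mu v : 'cV[R]_n) : P^T = P -> P *m P = P ->
  P *m v = v -> sqnorm (P *m mu - mu) <= sqnorm (v - mu).
Proof.
move=> Pt PP Pv.
set a := v - P *m mu; set b := P *m mu - mu.
have ab : a^T *m b = 0.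
  have -> : a = P *m (v - mu) by rewrite /a mulmxBr Pv.
  by rewrite trmx_mul Pt -mulmxA /b mulmxBr mulmxA PP subrr mulmx0.
have ba : b^T *m a = 0 by rewrite -[b^T *m a]trmxK trmx_mul trmxK ab trmx0.
have -> : v - mu = a + b by rewrite /a /b addrA subrK.
have tD : (a + b)^T = a^T + b^T by apply/matrixP=> i j; rewrite !mxE.
rewrite !sqnormE tD mulmxDl (mulmxDr a^T a) (mulmxDr b^T a) ab ba addr0 add0r entryD.
by rewrite lerDr -sqnormE sqnorm_ge0.
Qed.

Lemma tr_row n (A Om : 'M[R]_n) :
  \tr (A *m Om *m A^T) = \sum_i (row i A *m Om *m (row i A)^T) 0 0.
Proof.
apply: eq_bigr => i _; rewrite !mxE; apply: eq_bigr => j _; rewrite !mxE.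
congr (_ * _); apply: eq_bigr => k _; rewrite !mxE //.
Qed.

Lemma tr_row1 n (A : 'M[R]_n) :
  \tr (A *m A^T) = \sum_i (row i A *m (row i A)^T) 0 0.
Proof.
apply: eq_bigr => i _; rewrite !mxE; apply: eq_bigr => j _; rewrite !mxE //.
Qed.


Lemma risk_sym n (mu : 'cV[R]_n) (Om P : 'M[R]_n) : P^T = P -> P *m P = P ->
  riskA mu Om P = (mu^T *m mu) 0 0 - (mu^T *m P *m mu) 0 0 + \tr (P *m Om).
Proof.
move=> Pt PP; rewrite /riskA sqnormE.
have tB : (P *m mu - mu)^T = mu^T *m P - mu^T.
  have -> : (P *m mu - mu)^T = (P *m mu)^T - mu^T.
    by apply/matrixP=> i j; rewrite !mxE.
  by rewrite trmx_mul Pt.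
have e : (P *m mu - mu)^T *m (P *m mu - mu) = mu^T *m mu - mu^T *m P *m mu.
  rewrite tB mulmxBl !mulmxBr !mulmxA -(mulmxA _ P P) PP.
  by rewrite subrr sub0r opprB.
rewrite e entryB; congr (_ + _).
by rewrite mxtrace_mulC mulmxA Pt PP.
Qed.

Lemma tr_bounds n (Om : 'M[R]_n) (c1 c2 : R) : Om^T = Om ->
  (forall a, eigenvalue Om a -> c1 < a < c2) -> forall A : 'M[R]_n,
  c1 * \tr (A *m A^T) <= \tr (A *m Om *m A^T) /\
  \tr (A *m Om *m A^T) <= c2 * \tr (A *m A^T).
Proof.
move=> Omt Oeig A; rewrite tr_row tr_row1 !mulr_sumr; split; apply: ler_sum => i _.
  by case: (ray Omt Oeig (row i A)).
by case: (ray Omt Oeig (row i A)).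
Qed.

End Proj.

Section Arith.
Variable R : realType.
Lemma arith (L W A B v m b c1 c2 : R) : 0 < c1 -> 0 <= c2 -> 0 < b -> b <= B ->
  0 <= A -> A <= v * m -> c1 * B <= L -> L - W <= c2 * A -> W <= L ->
  1 - (c2 * v / c1) * (m / b) <= W / L <= 1.
Proof.
move=> c1p c2p bp bB A0 Avm BL LW WL.
have c1b : 0 < c1 * b by rewrite mulr_gt0.
have c1bL : c1 * b <= L by apply: le_trans BL; rewrite ler_pM2l.
have Lp : 0 < L by apply: lt_le_trans c1bL.
set x := W / L; set y := c2 * v / c1 * (m / b).
have hx : W = x * L by rewrite /x mulfVK // gt_eqF.
have hy : c1 * b * y = c2 * (v * m).
  by rewrite /y; field; rewrite !lt0r_neq0.
have vm0 : 0 <= c2 * (v * m) by rewrite mulr_ge0 //; apply: le_trans Avm.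
have y0 : 0 <= y.
  by rewrite -(pmulr_rge0 _ c1b) hy.
have h1 : L * (1 - x) <= L * y.
  have -> : L * (1 - x) = L - W by rewrite hx; ring.
  apply: le_trans LW _; apply: le_trans (ler_wpM2l c2p Avm) _.
  by rewrite -hy ler_wpM2r.
rewrite ler_pM2l // in h1.
apply/andP; split; first lra.
by rewrite ler_pdivrMr // mul1r.
Qed.
End Arith.

Section Fixed.
Variable R : realType.
Variables (n p q M : nat) (nu : nat -> nat) (X : 'M[R]_(n, p)) (beta : 'cV[R]_p)
  (Om : 'M[R]_n) (mstar mstar2 : nat) (wstar : 'I_M -> R) (c1 c2 : R).
Hypothesis hpn : (p < n)%N.
Hypothesis hM2 : (2 <= M)%N.
Hypothesis hMq : (M <= q)%N.
Hypothesis hnu0 : nu 0%N = 0%N.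
Hypothesis hnuinc : forall m, (m < q)%N -> (nu m < nu m.+1)%N.
Hypothesis hrank : forall m, (1 <= m <= q)%N -> \rank (firstcols (nu m) X) = nu m.
Hypothesis hOmt : Om^T = Om.
Hypothesis hc1 : 0 < c1.
Hypothesis heig : forall a, eigenvalue Om a -> c1 < a < c2.

Local Notation mu := (X *m beta).
Local Notation P := (Pm X nu).
Local Notation Rn := (Rmod X beta Om nu).

Lemma nu_mono k l : (k <= l)%N -> (l <= q)%N -> (nu k <= nu l)%N.
Proof.
move=> kl lq; elim: l kl lq => [|l IH]; first by rewrite leqn0 => /eqP ->.
rewrite leq_eqVlt => /orP[/eqP -> //|]; rewrite ltnS => kl lq.
apply: leq_trans (IH kl (ltnW lq)) _; exact/ltnW/hnuinc.
Qed.

Lemma nu_ge m : (m <= q)%N -> (m <= nu m)%N.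
Proof.
elim: m => [//|m IH] mq.
by apply: leq_ltn_trans (IH (ltnW mq)) _; apply: hnuinc.
Qed.

Lemma rk m : (m <= q)%N -> \rank (firstcols (nu m) X) = nu m.
Proof.
case: m => [_|m mq]; last by apply: hrank; rewrite mq.
apply/eqP; rewrite eqn_leq rank_leq_col /=.
by rewrite hnu0.
Qed.

Lemma Psym m : (P m)^T = P m.
Proof. exact: projmx_tr. Qed.

Lemma Pidem m : (m <= q)%N -> P m *m P m = P m.
Proof. by move=> mq; apply: projmx_idem; apply: rk. Qed.

Lemma Ptr m : (m <= q)%N -> \tr (P m) = (nu m)%:R.
Proof. by move=> mq; apply: projmx_trace; apply: rk. Qed.

Lemma Pnest k l : (k <= l)%N -> (l <= q)%N ->
  P l *m P k = P k /\ P k *m P l = P k.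
Proof.
move=> kl lq; apply: (projmx_nest (S := selmx R (nu l) (nu k))).
  exact: rk.
by apply: firstcols_sub; apply: nu_mono.
Qed.

Lemma trPOP m : (m <= q)%N ->
  c1 * (nu m)%:R <= \tr (P m *m Om *m (P m)^T) /\
  \tr (P m *m Om *m (P m)^T) <= c2 * (nu m)%:R.
Proof.
move=> mq; have := tr_bounds hOmt heig (P m).
by rewrite Psym Pidem // Ptr.
Qed.

Lemma Rn_ge m : (m <= q)%N -> c1 * (nu m)%:R <= Rn m.
Proof.
move=> mq; rewrite /Rmod /riskA; have [h _] := trPOP mq.
by apply: le_trans h _; rewrite lerDr sqnorm_ge0.
Qed.

Hypothesis hms : (1 <= mstar <= M)%N.
Hypothesis hmsmin : forall m, (1 <= m <= M)%N -> Rn mstar <= Rn m.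
Hypothesis hms2 : (1 <= mstar2 <= q)%N.
Hypothesis hms2min : forall m, (1 <= m <= q)%N -> Rn mstar2 <= Rn m.
Hypothesis hwmin : forall w : 'I_M -> R, inW w ->
  Rwt X beta Om nu wstar <= Rwt X beta Om nu w.

Lemma Rwt_le : Rwt X beta Om nu wstar <= Rn mstar.
Proof.
case/andP: hms => h1 h2.
have jM : (mstar.-1 < M)%N by rewrite prednK.
set j : 'I_M := Ordinal jM.
set e := fun i : 'I_M => ((i == j)%:R : R).
have we : wmx P e = P mstar.
  rewrite /wmx (bigD1 j) //= /e eqxx scale1r big1 ?addr0 /=; first by rewrite prednK.
  by move=> i /negPf ->; rewrite scale0r.
have ie : inW e.
  split.
    by move=> i; rewrite /e; case: (i == j); rewrite /= ?lexx ?ler01.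
  rewrite (bigD1 j) //= /e eqxx big1 ?addr0 //.
  by move=> i /negPf ->.
apply: le_trans (hwmin ie) _.
by rewrite /Rwt we.
Qed.

Lemma gap : Rn mstar - Rwt X beta Om nu wstar <= c2 * (nu M)%:R.
Proof.
set Pw := wmx P wstar.
have h1 : P M *m Pw = Pw.
  rewrite /Pw /wmx mulmx_sumr; apply: eq_bigr => i _.
  by rewrite -scalemxAr (Pnest (ltn_ord i) hMq).1.
have h2 : sqnorm (P M *m mu - mu) <= sqnorm (Pw *m mu - mu).
  apply: pyth; [exact: Psym | exact: Pidem | by rewrite mulmxA h1].
have h3 : 0 <= \tr (Pw *m Om *m Pw^T).
  have [h _] := tr_bounds hOmt heig Pw.
  by apply: le_trans h; rewrite mulr_ge0 ?trBBt_ge0 // ltW.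
have h4 : Rn mstar <= Rn M by apply: hmsmin; rewrite leqnn andbT ltnW.
have [_ h5] := trPOP hMq.
move: h4; rewrite /Rwt /Rmod /riskA -/Pw => h4.
lra.
Qed.

Lemma Rmstar_ge : c1 * (nu mstar2)%:R <= Rn mstar.
Proof.
case/andP: hms2 => _ h; apply: le_trans (Rn_ge h) _.
apply: hms2min; case/andP: hms => -> /= h'; exact: leq_trans h' hMq.
Qed.

Lemma step m : (1 <= m <= q)%N -> theta X beta Om nu m <= 0 -> Rn m.-1 < Rn m.
Proof.
case/andP=> m1 mq th.
have mm : (m.-1 <= m)%N by rewrite leq_pred.
have m1q : (m.-1 <= q)%N by apply: leq_trans mq.
have [n1 n2] := Pnest mm mq.
set D := P m - P m.-1.
have Dsym : D^T = D.
  have -> : D^T = (P m)^T - (P m.-1)^T by apply/matrixP=> i j; rewrite !mxE.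
  by rewrite !Psym.
have Didem : D *m D = D.
  by rewrite /D mulmxBl !mulmxBr !Pidem // n1 n2 subrr subr0.
have trD : \tr D = (nu m)%:R - (nu m.-1)%:R by rewrite /D raddfB /= !Ptr.
have nult : (nu m.-1 < nu m)%N.
  have := hnuinc (m := m.-1); rewrite prednK //; apply.
  by [].
have trDpos : 0 < \tr D by rewrite trD subr_gt0 ltr_nat.
have hb : c1 * \tr D <= \tr (D *m Om).
  have [h _] := tr_bounds hOmt heig D.
  move: h; rewrite Dsym Didem mxtrace_mulC mulmxA Didem.
  by rewrite mxtrace_mulC.
have bpos : 0 < \tr (D *m Om).
  by apply: lt_le_trans hb; rewrite mulr_gt0.
set a := (mu^T *m D *m mu) 0 0.
have npos : (0 < n%:R :> R) by rewrite ltr0n; apply: leq_ltn_trans hpn.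
have ha : a <= 0.
  move: th; rewrite /theta -/D -/a => th.
  have : (n%:R^-1 * a) <= 0.
    have -> : n%:R^-1 * a = (n%:R^-1 * a) / \tr (D *m Om) * \tr (D *m Om).
      by rewrite mulfVK // gt_eqF.
    by rewrite mulr_le0_ge0 // ltW.
  by rewrite pmulr_rle0 // invr_gt0.
have ea : a = (mu^T *m P m *m mu) 0 0 - (mu^T *m P m.-1 *m mu) 0 0.
  by rewrite /a /D mulmxBr mulmxBl entryB.
have eb : \tr (D *m Om) = \tr (P m *m Om) - \tr (P m.-1 *m Om).
  by rewrite /D mulmxBl raddfB.
rewrite /Rmod !risk_sym ?Psym ?Pidem //.
lra.
Qed.

Lemma ms2_le_d d : (1 <= d <= q)%N ->
  (forall m, (d < m <= q)%N -> theta X beta Om nu m <= 0) -> (mstar2 <= d)%N.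
Proof.
case/andP=> d1 dq hth.
have inc : forall k, (d + k <= q)%N -> Rn d <= Rn (d + k)
   /\ ((0 < k)%N -> Rn d < Rn (d + k)).
  elim=> [|k IH]; first by rewrite addn0 lexx.
  rewrite addnS => hk.
  have [IH1 IH2] := IH (ltnW hk).
  have st : Rn (d + k) < Rn (d + k).+1.
    have := step (m := (d + k).+1); apply; first by rewrite hk.
    by apply: hth; rewrite ltnS leq_addr hk.
  have lt := le_lt_trans IH1 st.
  by split => //; apply: ltW.
case/andP: hms2 => _ h2.
rewrite leqNgt; apply/negP => dlt.
have e : (d + (mstar2 - d) = mstar2)%N by rewrite subnKC // ltnW.
have hk : (d + (mstar2 - d) <= q)%N by rewrite e.
have [_ h] := inc _ hk; rewrite e in h.
have lt : Rn d < Rn mstar2 by apply: h => //; rewrite subn_gt0.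
have le : Rn mstar2 <= Rn d by apply: hms2min; rewrite d1 dq.
by move: (lt_le_trans lt le); rewrite ltxx.
Qed.

Hypothesis hc2 : 0 <= c2.

Lemma bound d (V : nat) : (1 <= d <= q)%N ->
  (forall m, (d < m <= q)%N -> theta X beta Om nu m <= 0) ->
  (forall m, (1 <= m <= d)%N -> (nu m - nu m.-1 <= V)%N) ->
  (M%:R / mstar2%:R : R) < 1 ->
  1 - (c2 * V%:R / c1) * (M%:R / mstar2%:R) <= Rwt X beta Om nu wstar / Rn mstar <= 1.
Proof.
move=> hd hth hV hlt.
have m2d := ms2_le_d hd hth.
case/andP: hd => d1 dq.
case/andP: hms2 => m21 m2q.
have m2pos : (0 < mstar2%:R :> R) by rewrite ltr0n.
have Mlt : (M < mstar2)%N.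
  by move: hlt; rewrite ltr_pdivrMr // mul1r ltr_nat.
have Md : (M <= d)%N by apply: leq_trans (ltnW Mlt) m2d.
have nuV : forall m, (m <= d)%N -> (nu m <= V * m)%N.
  elim=> [_|m IH md]; first by rewrite hnu0.
  have h1 : (nu m.+1 - nu m.+1.-1 <= V)%N by apply: hV; rewrite md.
  have h2 := IH (ltnW md).
  have h3 : (nu m <= nu m.+1)%N by apply: ltnW; apply: hnuinc; apply: leq_trans md dq.
  move: h1 h2 h3 => /=; lia.
apply: (@arith _ _ _ (nu M)%:R (nu mstar2)%:R V%:R M%:R mstar2%:R).
- exact: hc1.
- exact: hc2.
- exact: m2pos.
- by rewrite ler_nat nu_ge.
- by rewrite ler0n.
- by rewrite -natrM ler_nat; apply: nuV.
- exact: Rmstar_ge.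
- exact: gap.
- exact: Rwt_le.
Qed.

End Fixed.

Local Open Scope classical_set_scope.
Local Open Scope ring_scope.

Theorem theorem3 (R : realType) (p q M : nat -> nat) (nu : nat -> nat -> nat)
  (X : forall n : nat, 'M[R]_(n, p n)) (beta : forall n : nat, 'cV[R]_(p n))
  (Om : forall n : nat, 'M[R]_n)
  (mstar mstar2 : nat -> nat) (wstar : forall n : nat, 'I_(M n) -> R) :
  (* standing setting, for every (large) n *)
  (\forall n \near \oo,
     ((p n < n)%N /\ (2 <= M n)%N /\ (M n <= q n)%N /\
      nu n 0%N = 0%N /\ nu n (q n) = p n /\
      (forall m, (m < q n)%N -> (nu n m < nu n m.+1)%N) /\
      (forall m, (1 <= m <= q n)%N ->
         \rank (firstcols (nu n m) (X n)) = nu n m) /\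
      (Om n)^T = Om n /\
      (forall x : 'cV[R]_n, x != 0 -> 0 < (x^T *m Om n *m x) 0 0))) ->
  (* m*_n : unique minimiser of R_n(m) over {1,..,M_n} *)
  (\forall n \near \oo,
     [/\ (1 <= mstar n <= M n)%N,
         (forall m, (1 <= m <= M n)%N ->
            Rmod (X n) (beta n) (Om n) (nu n) (mstar n)
              <= Rmod (X n) (beta n) (Om n) (nu n) m) &
         (forall m, (1 <= m <= M n)%N ->
            Rmod (X n) (beta n) (Om n) (nu n) m
              = Rmod (X n) (beta n) (Om n) (nu n) (mstar n) -> m = mstar n)]) ->
  (* m**_n : unique minimiser of R_n(m) over {1,..,q_n} *)
  (\forall n \near \oo,
     [/\ (1 <= mstar2 n <= q n)%N,
         (forall m, (1 <= m <= q n)%N ->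
            Rmod (X n) (beta n) (Om n) (nu n) (mstar2 n)
              <= Rmod (X n) (beta n) (Om n) (nu n) m) &
         (forall m, (1 <= m <= q n)%N ->
            Rmod (X n) (beta n) (Om n) (nu n) m
              = Rmod (X n) (beta n) (Om n) (nu n) (mstar2 n) -> m = mstar2 n)]) ->
  (* w*_n : unique minimiser of R_n(w) over W_n *)
  (\forall n \near \oo,
     [/\ inW (wstar n),
         (forall w : 'I_(M n) -> R, inW w ->
            Rwt (X n) (beta n) (Om n) (nu n) (wstar n)
              <= Rwt (X n) (beta n) (Om n) (nu n) w) &
         (forall w : 'I_(M n) -> R, inW w ->
            Rwt (X n) (beta n) (Om n) (nu n) w
              = Rwt (X n) (beta n) (Om n) (nu n) (wstar n) -> w =1 wstar n)]) ->
  (* Assumption 1 *)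
  (exists C : R, \forall n \near \oo,
     sqnorm (X n *m beta n) / n%:R <= C) ->
  (* Assumption 2 *)
  (exists c1 c2 : R, 0 < c1 /\ c1 <= c2 /\
     forall n a, eigenvalue (Om n) a -> c1 < a < c2) ->
  (* Assumption 3 *)
  (\forall n \near \oo, forall m, (1 <= m)%N -> (m < q n)%N ->
     theta (X n) (beta n) (Om n) (nu n) m.+1
       <= theta (X n) (beta n) (Om n) (nu n) m) ->
  (* Assumption 4 *)
  (exists V : nat, (1 <= V)%N /\ \forall n \near \oo,
     forall m, (1 <= m <= dn (q n) (theta (X n) (beta n) (Om n) (nu n)))%N ->
       (nu n m - nu n m.-1 <= V)%N) ->
  (* Assumption 5 *)
  (forall m : nat, (1 <= m)%N -> exists (thb : R) (K : nat),
     0 < thb /\ (0 < K)%N /\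
     forall n, (K <= n)%N ->
       (m <= dn (q n) (theta (X n) (beta n) (Om n) (nu n)))%N /\
       thb <= theta (X n) (beta n) (Om n) (nu n) m) ->
  (* Assumption 6 *)
  (\forall n \near \oo,
     let d := dn (q n) (theta (X n) (beta n) (Om n) (nu n)) in
     let Rn := Rmod (X n) (beta n) (Om n) (nu n) in
     exists m' : nat, [/\ (1 <= m' <= d.-1)%N,
       (forall m, (2 <= m <= m')%N -> Rn m < Rn m.-1),
       (forall m, (m' < m <= d)%N -> Rn m.-1 <= Rn m) &
       Rn d.-1 < Rn d]) ->
  (* Condition M1 *)
  ((fun n => (M n)%:R / (mstar2 n)%:R : R) @ \oo --> (0 : R)) ->
  (* conclusion: R_n(w*_n) / R_n(m*_n) -> 1 *)
  ((fun n => Rwt (X n) (beta n) (Om n) (nu n) (wstar n)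
             / Rmod (X n) (beta n) (Om n) (nu n) (mstar n)) @ \oo --> (1 : R)).
Proof.
move=> Hset Hms Hms2 Hw _ [c1 [c2 [hc1 [hc12 Heig]]]] _ [V [V1 HV]] A5 _ HM1.
have [thb [K [_ [_ HK]]]] := A5 1%N (leqnn 1).
have hc2 : 0 <= c2 by apply: le_trans hc12; apply: ltW.
have Hlt1 : \forall t \near \oo, ((M t)%:R / (mstar2 t)%:R : R) < 1.
  by apply: (@cvgr_lt R _ _ _ _ _ HM1 1 ltr01).
have HKn := nbhs_infty_ge K.
apply: (@squeeze_cvgr _ _ _ _
  (fun n => 1 - (c2 * V%:R / c1) * ((M n)%:R / (mstar2 n)%:R)) (fun _ => 1)).
- near=> n.
  have /(_ _)[//|hpn [hM2 [hMq [hnu0 [hnuq [hnuinc [hrank [hOmt hPD]]]]]]]] := near Hset n.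
  have /(_ _)[//|hms hmsmin _] := near Hms n.
  have /(_ _)[//|hms2 hms2min _] := near Hms2 n.
  have /(_ _)[//|_ hwmin _] := near Hw n.
  have /(_ _)/wrap[//|hV] := near HV n.
  have /(_ _)/wrap[//|hKn] := near HKn n.
  have hd1 := (HK n hKn).1.
  have /(_ _)/wrap[//|hlt] := near Hlt1 n.
  set d := dn (q n) (theta (X n) (beta n) (Om n) (nu n)).
  have dq : (d <= q n)%N.
    apply/bigmax_leqP_seq => i; rewrite mem_index_iota => /andP[_ h] _.
    by rewrite -ltnS.
  have dth : forall m, (d < m <= q n)%N -> theta (X n) (beta n) (Om n) (nu n) m <= 0.
    move=> m /andP[dm mq]; rewrite leNgt; apply/negP => pos.
    have : (m <= d)%N.
      apply: (leq_bigmax_seq (F := id)) => //.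
      rewrite mem_index_iota ltnS mq andbT.
      by apply: leq_trans dm; apply: leq_trans hd1 _.
    by rewrite leqNgt dm.
  have hdq : (0 < d <= q n)%N by rewrite hd1 dq.
  exact: (@bound R n (p n) (q n) (M n) (nu n) (X n) (beta n) (Om n) (mstar n)
    (mstar2 n) (wstar n) c1 c2 hpn hM2 hMq hnu0 hnuinc hrank hOmt hc1 (Heig n) hms
    hmsmin hms2 hms2min hwmin hc2 d V hdq dth hV hlt).
- have h : (fun x => c2 * V%:R / c1 * ((M x)%:R / (mstar2 x)%:R)) @ \oo -->
      (c2 * V%:R / c1 * 0 : R) by apply: cvgMl_tmp.
  have h2 : (fun x => 1 - c2 * V%:R / c1 * ((M x)%:R / (mstar2 x)%:R)) @ \oo -->
      (1 - c2 * V%:R / c1 * 0 : R).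
    by apply: cvgB; [exact: cvg_cst | exact: h].
  by rewrite mulr0 subr0 in h2.
- exact: cvg_cst.
Unshelve. all: end_near.
Qed.
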